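(* Every integer partition $\lambda$ satisfies at least one of the following: (1) $\lambda$ is novel, or $\lambda=c\mu$ for some integer $c\ge 2$ and some novel partition $\mu$; (2) there is a novel partition $\mu$ of strictly smaller length than $\lambda$ with $\lambda\Rightarrow\mu$; (3) $\lambda^{\perp B}=\emptyset$.
   Context: An integer partition is $\lambda=(\lambda_1,\dots,\lambda_k)$ with integers $\lambda_1\ge\dots\ge\lambda_k\ge 1$; $k$ is its length; $c\lambda=(c\lambda_1,\dots,c\lambda_k)$. For $v\in\mathbb{Z}^k$ let $v^{\perp B}=\{x\in\{-1,1\}^k: v\cdot x=0\}$; $\lambda^{\perp B}$ is this set for $(\lambda_1,\dots,\lambda_k)$. $V_\lambda\subset\mathbb{Z}^k$ is the set of vectors obtained from $(\lambda_1,\dots,\lambda_k)$ by permuting coordinates and changing signs of some coordinates, with first coordinate positive. For $I\subset\{1,\dots,m\}$, $\mathrm{Proj}_I:\{-1,1\}^m\to\{-1,1\}^{|I|}$ keeps the coordinates indexed by $I$. Reduction: for partitions $\mu$ of length $m$ and $\lambda$ of length $k\le m$, $\mu\Rightarrow\lambda$ iff there exist $I\subset\{1,\dots,m\}$, $|I|=k$, and $v\in V_\lambda$ with $\mathrm{Proj}_I(\mu^{\perp B})\subset v^{\perp B}$. $\mu$ strictly reduces to $\lambda$ iff $\mu\Rightarrow\lambda$ and not $\lambda\Rightarrow\mu$. Partitions $\lambda,\mu$ of the same length are equivalent iff there is $w\in V_\mu$ with $\lambda^{\perp B}=w^{\perp B}$. A partition $\lambda$ is novel iff $\lambda^{\perp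 B}\neq\emptyset$, $\lambda$ strictly reduces to no partition, and $\lambda$ is lexicographically smallest among partitions equivalent to it. *)

(* Defs.v *)
From mathcomp Require Import all_boot all_order all_algebra.
Set Implicit Arguments. Unset Strict Implicit. Unset Printing Implicit Defensive.
Import GRing.Theory Num.Theory.

Definition is_partition (l : seq nat) : Prop :=
  (0 < size l)%N /\ sorted geq l /\ all (fun a => 0 < a)%N l.

Definition sign_vec (k : nat) (x : seq int) : Prop :=
  size x = k /\ all (fun a : int => (a == 1%R) || (a == (-1)%R)) x.

Definition dotz (v x : seq int) : int :=
  (\sum_(i < size v) v`_i * x`_i)%R.

Definition perpB (v : seq int) (x : seq int) : Prop :=
  sign_vec (size v) x /\ dotz v x = 0%R.

Definition lamPerpB (lam : seq nat) (x : seq int) : Prop :=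
  perpB [seq Posz a | a <- lam] x.

Definition inV (lam : seq nat) (v : seq int) : Prop :=
  perm_eq [seq absz a | a <- v] lam /\ (0 < head 0 v)%R.

(* mu => lam. The subset I of {1..m} is encoded by its indicator b : bitseq,
   and Proj_I is mask b. *)
Definition reduces (mu lam : seq nat) : Prop :=
  exists b : seq bool, size b = size mu /\ count id b = size lam /\
    exists v, inV lam v /\ forall x, lamPerpB mu x -> perpB v (mask b x).

Definition strictly_reduces (mu lam : seq nat) : Prop :=
  reduces mu lam /\ ~ reduces lam mu.

Definition equivalent (lam mu : seq nat) : Prop :=
  size lam = size mu /\
  exists w, inV mu w /\ forall x, lamPerpB lam x <-> perpB w x.

Fixpoint lex_le (s t : seq nat) : bool :=
  match s, t with
  | [::], _ => true
  | _ :: _, [::] => false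
  | a :: s', b :: t' => (a < b)%N || ((a == b) && lex_le s' t')
  end.

Definition novel (lam : seq nat) : Prop :=
  is_partition lam /\
  (exists x, lamPerpB lam x) /\
  (forall mu, is_partition mu -> ~ strictly_reduces lam mu) /\
  (forall mu, is_partition mu -> equivalent lam mu -> lex_le lam mu).

Definition scale_part (c : nat) (mu : seq nat) : seq nat := [seq c * a | a <- mu]%N.

(* Main.v *)
Require Import Defs.
From mathcomp Require Import all_boot all_order all_algebra.
From mathcomp Require Import ring lra.
From Stdlib Require Import Classical.
Set Implicit Arguments. Unset Strict Implicit. Unset Printing Implicit Defensive.
Import Order.TTheory GRing.Theory Num.Theory.
Local Open Scope ring_scope.

Lemma nthPosz (l : seq nat) i : nth 0 (map Posz l) i = (nth 0%N l i)%:Z.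
Proof.
case: (ltnP i (size l)) => h; first by rewrite (nth_map 0%N).
by rewrite !nth_default ?size_map.
Qed.

Lemma lamPerpBE l x : lamPerpB l x <->
  sign_vec (size l) x /\ \sum_(i < size l) (nth 0%N l i)%:Z * x`_i = 0.
Proof.
rewrite /lamPerpB /perpB /dotz size_map.
by under eq_bigr => i _ do rewrite nthPosz.
Qed.

Lemma sv_nth k x i : sign_vec k x -> (i < k)%N -> x`_i = 1 \/ x`_i = -1.
Proof.
move=> [hs /all_nthP hall] hi.
by move: (hall 0 i); rewrite hs => /(_ hi) /orP[/eqP->|/eqP->]; [left|right].
Qed.

Lemma sv_mk k x : size x = k -> (forall i, (i < k)%N -> x`_i = 1 \/ x`_i = -1) ->
  sign_vec k x.
Proof.
move=> hs h; split => //; apply/(all_nthP 0) => i hi.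
by move: (h i); rewrite -hs => /(_ hi) [->|->]; rewrite eqxx ?orbT.
Qed.

Lemma pm1_mul (a b : int) : (a = 1 \/ a = -1) -> (b = 1 \/ b = -1) -> a * b = 1 \/ a * b = -1.
Proof. by case=> ->; case=> ->; rewrite ?mulN1r ?mul1r ?opprK; auto. Qed.

Definition Rf (lam nu : seq nat) := exists (f : nat -> nat) (s : nat -> int),
  (forall i, (i < size nu)%N -> (f i < size lam)%N) /\
  (forall i j, (i < size nu)%N -> (j < size nu)%N -> f i = f j -> i = j) /\
  (forall i, s i = 1 \/ s i = -1) /\
  forall x, lamPerpB lam x ->
    \sum_(i < size nu) s i * (nth 0%N nu i)%:Z * x`_(f i) = 0.

Lemma Rf_z (lam nu : seq nat) (f : nat -> nat) (s : nat -> int) (x : seq int) :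
  (forall i, (i < size nu)%N -> (f i < size lam)%N) ->
  (forall i, s i = 1 \/ s i = -1) ->
  lamPerpB lam x ->
  \sum_(i < size nu) s i * (nth 0%N nu i)%:Z * x`_(f i) = 0 ->
  lamPerpB nu (mkseq (fun i => s i * x`_(f i)) (size nu)).
Proof.
move=> hf hs /lamPerpBE [hx _] hsum; apply/lamPerpBE; split.
  apply: sv_mk; first by rewrite size_mkseq.
  move=> i hi; rewrite nth_mkseq //; apply: pm1_mul => //.
  exact: sv_nth hx (hf i hi).
rewrite -[RHS]hsum; apply: eq_bigr => i _; rewrite nth_mkseq //.
by rewrite mulrA [_ * s i]mulrC.
Qed.

Lemma Rf_perp lam nu x : Rf lam nu -> lamPerpB lam x -> exists z, lamPerpB nu z.
Proof.
move=> [f [s [hf [_ [hs h]]]]] hx; eexists; apply: Rf_z hf hs hx (h x hx).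
Qed.

Lemma Rf_trans a b c : Rf a b -> Rf b c -> Rf a c.
Proof.
move=> [f [s [hf [hi [hs h]]]]] [g [t [hg [hj [ht h']]]]].
exists (fun j => f (g j)), (fun j => t j * s (g j)); split; [|split; [|split]].
- by move=> i hi'; apply/hf/hg.
- by move=> i j hi1 hj1 /hi => /(_ (hg _ hi1) (hg _ hj1)) /hj; apply.
- by move=> i; apply: pm1_mul.
move=> x hx; have := h' _ (Rf_z hf hs hx (h x hx)).
move=> e; rewrite -[RHS]e; apply: eq_bigr => i _; rewrite nth_mkseq ?hg //.
by rewrite -!mulrA; congr (_ * _); rewrite mulrCA.
Qed.

From mathcomp Require Import zify.

Lemma sum_iota m (F : nat -> int) : \sum_(j < m) F j = \sum_(j <- iota 0 m) F j.
Proof. by rewrite -(big_mkord xpredT) /index_iota subn0. Qed.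

Lemma ured (lam nu : seq nat) (u : nat -> int) :
  (0 < size nu)%N ->
  perm_eq nu [seq absz (u j) | j <- iota 0 (size lam) & u j != 0] ->
  (forall x, lamPerpB lam x -> \sum_(j < size lam) u j * x`_j = 0) ->
  reduces lam nu.
Proof.
move=> hn hp hd.
set m := size lam.
set J := [seq j <- iota 0 m | u j != 0].
set b := [seq u j != 0 | j <- iota 0 m].
have hJ : mask b (iota 0 m) = J by rewrite /J filter_mask.
have hsJ : size J = size nu by rewrite (perm_size hp) size_map.
have hcb : count id b = size J by rewrite -(size_mask (s := iota 0 m)) ?hJ // size_map.
have hJm : forall q, (q < size J)%N -> (nth 0%N J q < m)%N.
  by move=> q hq; have := mem_nth 0%N hq; rewrite mem_filter mem_iota => /andP[_ /andP[]].
set v0 := map u J.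
have hh : head 0 v0 != 0.
  rewrite /v0; case hJe: J => [|j J']; first by move: hsJ; rewrite hJe => /= h0; rewrite -h0 in hn.
  have : j \in J by rewrite hJe mem_head.
  by rewrite mem_filter => /andP[].
have habs : map absz v0 = [seq absz (u j) | j <- iota 0 m & u j != 0] by rewrite /v0 -map_comp.
have hmx : forall x : seq int, size x = m -> mask b x = map (nth 0 x) J.
  by move=> x hx; rewrite -hJ map_mask -[in LHS](mkseq_nth 0 x) hx.
have hdot : forall x : seq int, size x = m ->
    \sum_(q < size v0) v0`_q * (mask b x)`_q = \sum_(j < m) u j * x`_j.
  move=> x hx; rewrite hmx // /v0 size_map.
  transitivity (\sum_(j <- J) u j * x`_j).
    by rewrite (big_nth 0%N) big_mkord; apply: eq_bigr => q _; rewrite !(nth_map 0%N).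
  rewrite (sum_iota m (fun j => u j * x`_j)).
  rewrite /J big_filter.
  rewrite big_mkcond.
  apply: eq_bigr => j _.
  by case: eqP => [->|]; rewrite ?mul0r.
exists b; split; first by rewrite size_map size_iota.
split; first by rewrite hcb.
exists (if (0 < head 0 v0) then v0 else map -%R v0); split.
  split.
    case: ifP => _; first by rewrite habs perm_sym.
    have -> : map absz (map -%R v0) = map absz v0.
      by rewrite -map_comp; apply: eq_map => a /=; rewrite abszN.
    by rewrite habs perm_sym.
  case: ifP => // /negbT; rewrite -leNgt => hle.
  have : head 0 v0 < 0 by rewrite lt_neqAle hh hle.
  by case: (v0) => [|a v0'] //=; rewrite ?ltxx // oppr_gt0.
move=> x /[dup] hx /lamPerpBE [hsv _]; have hsx := hsv.1; split.
  apply: sv_mk.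
    by rewrite size_mask ?hcb ?size_map ?size_iota ?hsx //; case: ifP; rewrite ?size_map.
  move=> q; rewrite hmx // (_ : size _ = size J); last by case: ifP; rewrite ?size_map.
  move=> hq; rewrite (nth_map 0%N) //; apply: (sv_nth hsv); exact: hJm.
rewrite /dotz; case: ifP => _; first by rewrite hdot // hd.
rewrite size_map.
transitivity (- \sum_(q < size v0) v0`_q * (mask b x)`_q); last by rewrite hdot // hd ?oppr0.
rewrite -sumrN; apply: eq_bigr => q _; by rewrite (nth_map 0) // mulNr.
Qed.

Lemma Rf_reduces lam nu : all (fun a => 0 < a)%N nu -> (0 < size nu)%N ->
  Rf lam nu -> reduces lam nu.
Proof.
move=> hpos hn [f [s [hf [hi [hs h]]]]].
set k := size nu; set m := size lam.
have hnu : forall i, (i < k)%N -> (0 < nth 0%N nu i)%N.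
  by move=> i hik; apply: (all_nthP 0%N hpos).
pose u j := \sum_(i < k) ((f i == j)%:R * (s i * (nth 0%N nu i)%:Z)).
have hu : forall i, (i < k)%N -> u (f i) = s i * (nth 0%N nu i)%:Z.
  move=> i hik; rewrite /u (bigD1 (Ordinal hik)) //= eqxx mul1r big1 ?addr0 // => i' hne.
  case: eqP => [e|]; last by rewrite mul0r.
  have := hi _ _ (ltn_ord i') hik e => e'.
  by move: hne; rewrite -val_eqE /= e' eqxx.
have hu0 : forall j, (forall i, (i < k)%N -> f i != j) -> u j = 0.
  by move=> j hj; rewrite /u big1 // => i _; rewrite (negbTE (hj i (ltn_ord i))) mul0r.
have hsn : forall i, (i < k)%N -> s i * (nth 0%N nu i)%:Z != 0.
  move=> i hik; have hz : (nth 0%N nu i)%:Z != 0 by rewrite eqz_nat -lt0n hnu.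
  by case: (hs i) => ->; rewrite ?mul1r ?mulN1r ?oppr_eq0.
apply: (ured (u := u)) => //.
- have hF : perm_eq [seq j <- iota 0 m | u j != 0] (map f (iota 0 k)).
    apply: uniq_perm; first exact: (filter_uniq _ (iota_uniq _ _)).
      rewrite map_inj_in_uniq ?iota_uniq // => a b.
      by rewrite !mem_iota /= => ha hb; apply: hi.
    move=> j; rewrite mem_filter mem_iota /=; apply/idP/idP.
      move=> /andP[hj _]; case: (boolP [exists i : 'I_k, f i == j]).
        by move=> /existsP [i /eqP <-]; apply/mapP; exists (val i); rewrite // mem_iota /=.
      move=> /existsPn hne; rewrite hu0 ?eqxx // in hj.
      by move=> i hik; exact: (hne (Ordinal hik)).
    move=> /mapP [i]; rewrite mem_iota /= => hik ->.
    by rewrite hu // hsn // hf.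
  have e : [seq absz (u j) | j <- map f (iota 0 k)] = nu.
    rewrite -map_comp -[RHS](mkseq_nth 0%N nu); rewrite /mkseq; apply/eq_in_map => i.
    rewrite mem_iota /= => hik; rewrite hu // abszM.
    by case: (hs i) => ->; rewrite /= ?mul1n.
  rewrite -[X in perm_eq X _]e perm_sym; exact: perm_map hF.
- move=> x hx; rewrite -[RHS](h x hx).
  under eq_bigr => j _ do rewrite /u mulr_suml.
  rewrite exchange_big /=; apply: eq_bigr => i _.
  rewrite (bigD1 (Ordinal (hf i (ltn_ord i)))) //= eqxx mul1r big1 ?addr0 // => j hne.
  case: eqP => [e|_]; last by rewrite !mul0r.
  by move: hne; rewrite -val_eqE /= e eqxx.
Qed.

Lemma reduces_Rf lam nu : reduces lam nu -> Rf lam nu.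
Proof.
move=> [b [hb [hc [v [[hp hv] h]]]]].
set m := size lam; set k := size nu.
have hsv : size v = k by rewrite /k -(perm_size hp) size_map.
have := hp; rewrite perm_sym => /(perm_iotaP 0%N) [Is hIs hnu].
set J := mask b (iota 0 m).
have hsJ : size J = k by rewrite size_mask ?size_iota // hc.
have hsIs : size Is = k by rewrite (perm_size hIs) size_iota size_map hsv.
have hIsk : forall i, (i < k)%N -> (nth 0%N Is i < k)%N.
  move=> i hi; have : nth 0%N Is i \in Is by rewrite mem_nth // hsIs.
  by rewrite (perm_mem hIs) mem_iota size_map hsv.
have hJm : forall q, (q < k)%N -> (nth 0%N J q < m)%N.
  move=> q hq; have : nth 0%N J q \in J by rewrite mem_nth // hsJ.
  by move/mem_mask; rewrite mem_iota.
have hnth : forall i, (i < k)%N -> nth 0%N nu i = absz (v`_(nth 0%N Is i)).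
  move=> i hi; rewrite hnu (nth_map 0%N) ?hsIs // (nth_map 0) // hsv; exact: hIsk.
exists (fun i => nth 0%N J (nth 0%N Is i)),
  (fun i => if v`_(nth 0%N Is i) < 0 then -1 else 1).
split; [|split; [|split]].
- move=> i hi; apply: hJm; exact: hIsk.
- have hJu : uniq J := mask_uniq (iota_uniq 0 m) b.
  move=> i j hi hj /eqP; rewrite nth_uniq ?hsJ ?hIsk //.
  move/eqP/eqP; rewrite nth_uniq ?hsIs //; first by move/eqP.
  by rewrite (perm_uniq hIs) iota_uniq.
- by move=> i; case: ifP; [right|left].
- move=> x /[dup] hx /lamPerpBE [[hsx _] _].
  have := h x hx => -[_ hd].
  have hmx : mask b x = map (nth 0 x) J by rewrite /J map_mask -[in LHS](mkseq_nth 0 x) hsx.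
  rewrite -[RHS]hd /dotz hsv.
  transitivity (\sum_(p <- Is) v`_p * (mask b x)`_p).
    rewrite (big_nth 0%N) big_mkord hsIs; apply: eq_bigr => i _.
    rewrite hnth // hmx (nth_map 0%N) ?hsJ ?hIsk // abszE.
    case: ifP => ha; first by rewrite ltr0_norm // mulN1r opprK.
    by rewrite ger0_norm ?mul1r // leNgt ha.
  by rewrite (perm_big _ hIs) size_map hsv -sum_iota.
Qed.

Lemma perp_scale c mu x : (0 < c)%N -> lamPerpB (scale_part c mu) x <-> lamPerpB mu x.
Proof.
move=> hc; rewrite !lamPerpBE.
have hs : size (scale_part c mu) = size mu by rewrite size_map.
rewrite hs.
have -> : \sum_(i < size mu) (nth 0%N (scale_part c mu) i)%:Z * x`_i =
    c%:Z * \sum_(i < size mu) (nth 0%N mu i)%:Z * x`_i.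
  by rewrite mulr_sumr; apply: eq_bigr => i _; rewrite (nth_map 0%N) // PoszM mulrA.
split => -[h1 h2]; split => //; last by rewrite h2 mulr0.
by move/eqP: h2; rewrite mulf_eq0 eqz_nat gtn_eqF //= => /eqP.
Qed.

Definition G (s : seq nat) := foldr gcdn 0%N s.

Lemma G_dvd s a : a \in s -> (G s %| a)%N.
Proof.
elim: s => //= b s IH; rewrite inE => /orP[/eqP->|/IH h]; first exact: dvdn_gcdl.
exact: dvdn_trans (dvdn_gcdr _ _) h.
Qed.

Lemma G_scale c s : G (scale_part c s) = (c * G s)%N.
Proof. by elim: s => [|a s IH] /=; [rewrite muln0 | rewrite IH muln_gcdr]. Qed.

Lemma dvd_G d n s : (forall a, a \in s -> d %| n * a)%N -> (d %| n * G s)%N.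
Proof.
elim: s => [|a s IH] h /=; first by rewrite muln0 dvdn0.
rewrite muln_gcdr dvdn_gcd h ?mem_head //=; apply: IH => b hb; apply: h; by rewrite inE hb orbT.
Qed.

Lemma exmax (m : nat) (L v : nat -> int) : (0 < m)%N -> (forall i, (i < m)%N -> 0 < L i) ->
  exists2 i0, (i0 < m)%N & forall j, (j < m)%N -> v j * L i0 <= v i0 * L j.
Proof.
case: m => // m _; elim: m => [|m IH] hL.
  by exists 0%N => // j; rewrite ltnS leqn0 => /eqP->.
have [i0 hi0 hmax] := IH (fun i hi => hL i (leqW hi)).
case: (lerP (v m.+1 * L i0) (v i0 * L m.+1)) => hc.
  exists i0 => [|j]; first exact: leqW.
  by rewrite ltnS leq_eqVlt => /orP [/eqP ->|hj] //; exact: hmax.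
exists m.+1 => // j; rewrite ltnS leq_eqVlt => /orP [/eqP->|hj]; first exact: le_refl.
have h1 := hmax j hj; have := hL i0 (leqW hi0); have := hL j (leqW hj).
have := hL m.+1 (ltnSn _); nra.
Qed.

Lemma lex_scale c s : (0 < c)%N -> lex_le s (scale_part c s).
Proof.
move=> hc; elim: s => //= a s IH.
case: (ltnP a (c * a)) => //= h.
have h2 : (a <= c * a)%N by rewrite leq_pmull.
have -> : (a == c * a)%N by apply/eqP/anti_leq; rewrite h h2.
exact: IH.
Qed.

Lemma key lam : is_partition lam ->
  ~ (exists nu, is_partition nu /\ (size nu < size lam)%N /\ reduces lam nu) ->
  forall v : nat -> int,
  (forall x, lamPerpB lam x -> \sum_(i < size lam) v i * x`_i = 0) ->
  forall i j, (i < size lam)%N -> (j < size lam)%N ->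
  v i * (nth 0%N lam j)%:Z = v j * (nth 0%N lam i)%:Z.
Proof.
move=> [hn [hs hpos]] hno v hv.
set m := size lam.
pose L i := (nth 0%N lam i)%:Z.
have hL : forall i, (i < m)%N -> 0 < L i.
  by move=> i hi; rewrite /L ltz_nat; apply: (all_nthP 0%N hpos).
have [i0 hi0 hmax] := exmax v hn hL.
pose u j := v i0 * L j - v j * L i0.
have hz : forall j, (j < m)%N -> u j = 0.
  move=> j hj; case: (eqVneq (u j) 0) => // hne; exfalso; apply: hno.
  pose w := [seq absz (u j) | j <- iota 0 m & u j != 0].
  have hw0 : (0 < size w)%N.
    rewrite size_map size_filter -has_count; apply/hasP; exists j => //.
    by rewrite mem_iota.
  exists (sort geq w); split; [split; [|split]|split].
  - by rewrite size_sort.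
  - by apply: sort_sorted => a b; rewrite /geq /= leq_total.
  - rewrite all_sort; apply/allP => a /mapP [j'].
    by rewrite mem_filter => /andP[hne' _] ->; rewrite absz_gt0.
  - rewrite size_sort size_map size_filter.
    have := count_predC (fun j => u j != 0) (iota 0 m); rewrite size_iota.
    have : (0 < count (predC (fun j => u j != 0%R)) (iota 0 m))%N.
      rewrite -has_count; apply/hasP; exists i0; first by rewrite mem_iota.
      by rewrite /= /u subrr eqxx.
    move=> h1 h2; rewrite -[size lam]h2; lia.
  apply: (ured (u := u)); first by rewrite size_sort.
    by rewrite perm_sort perm_refl.
  move=> x /[dup] hx /lamPerpBE [_ hdl].
  transitivity (v i0 * \sum_(k < size lam) (nth 0%N lam k)%:Z * x`_k -
     (nth 0%N lam i0)%:Z * \sum_(k < size lam) v k * x`_k).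
    rewrite !mulr_sumr -sumrB; apply: eq_bigr => k _; rewrite /u /L; ring.
  by rewrite hdl hv // !mulr0 subrr.
move=> i j hi hj.
have := hz i hi; have := hz j hj; rewrite /u => /eqP; rewrite subr_eq0 => /eqP e1 /eqP.
rewrite subr_eq0 => /eqP e2.
change (v i * L j = v j * L i).
have : (v i * L j - v j * L i) * L i0 = 0.
  transitivity (L j * (v i * L i0) - L i * (v j * L i0)); first by ring.
  by rewrite -e1 -e2; ring.
by move/eqP; rewrite mulf_eq0 (gt_eqF (hL _ hi0)) orbF subr_eq0 => /eqP.
Qed.

Lemma corr (mu nu : seq nat) (v : seq int) : is_partition mu -> is_partition nu ->
  size v = size mu -> 0 < head 0 v -> perm_eq (map absz v) nu ->
  (forall i j, (i < size mu)%N -> (j < size mu)%N ->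
     v`_i * (nth 0%N mu j)%:Z = v`_j * (nth 0%N mu i)%:Z) ->
  size nu = size mu /\ forall i j, (i < size mu)%N -> (j < size mu)%N ->
    (nth 0%N nu i * nth 0%N mu j = nth 0%N nu j * nth 0%N mu i)%N.
Proof.
move=> [hn [hs hpos]] [_ [hsn _]] hsv hh hp hprop.
set m := size mu.
have hsnu : size nu = m by rewrite -(perm_size hp) size_map hsv.
have hmu : forall i, (i < m)%N -> 0 < (nth 0%N mu i)%:Z.
  by move=> i hi; rewrite ltz_nat; apply: (all_nthP 0%N hpos).
have hv0 : 0 < v`_0 by rewrite nth0.
have hvpos : forall j, (j < m)%N -> 0 < v`_j.
  move=> j hj; have e := hprop 0%N j hn hj.
  have := hmu j hj; have := hmu 0%N hn; nra.
have hsorted : sorted geq (map absz v).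
  apply/(sortedP 0%N) => i; rewrite size_map hsv => hi.
  have hmui := (sortedP 0%N hs) i hi.
  rewrite !(nth_map 0) ?hsv //; last exact: ltnW.
  rewrite /geq /= -lez_nat !abszE !gtr0_norm ?hvpos //; last exact: ltnW.
  move: hmui; rewrite /geq /= -lez_nat => hmui.
  have e1 := hprop 0%N i hn (ltnW hi); have e2 := hprop 0%N i.+1 hn hi.
  have := hmu 0%N hn; nra.
have heq : nu = map absz v.
  apply: (sorted_eq _ _ hsn hsorted); last by rewrite perm_sym.
    by move=> b a c h1 h2; exact: leq_trans h2 h1.
  by move=> a b /andP[h1 h2]; apply/anti_leq; rewrite /geq /= in h1 h2; rewrite h1 h2.
split => // i j hi hj; rewrite heq !(nth_map 0) ?hsv //.
apply/eqP; rewrite -eqz_nat !PoszM !abszE !gtr0_norm ?hvpos //; apply/eqP; exact: hprop.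
Qed.

Lemma Rf_sub a b : size b = size a -> (forall x, lamPerpB a x -> lamPerpB b x) -> Rf a b.
Proof.
move=> hs h; exists id, (fun _ => 1); split; [|split; [|split]].
- by move=> i; rewrite hs.
- by [].
- by left.
move=> x /h /lamPerpBE [_ hd]; rewrite -[RHS]hd; apply: eq_bigr => i _; by rewrite mul1r.
Qed.

Lemma absz_Posz_map (s : seq nat) : map absz (map Posz s) = s.
Proof. by elim: s => //= a s ->. Qed.

Lemma scale1 s : scale_part 1 s = s.
Proof. by elim: s => //= a s; rewrite /scale_part => ->; rewrite mul1n. Qed.

Theorem mainTheorem4 (lam : seq nat) :
  is_partition lam ->
  (novel lam \/ exists (c : nat) (mu : seq nat),
       (2 <= c)%N /\ novel mu /\ lam = scale_part c mu) \/
  (exists mu, novel mu /\ (size mu < size lam)%N /\ reduces lam mu) \/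
  (forall x, ~ lamPerpB lam x).
Proof.
move: lam; suff main : forall n lam, (size lam < n)%N -> is_partition lam ->
  (novel lam \/ exists (c : nat) (mu : seq nat),
       (2 <= c)%N /\ novel mu /\ lam = scale_part c mu) \/
  (exists mu, novel mu /\ (size mu < size lam)%N /\ reduces lam mu) \/
  (forall x, ~ lamPerpB lam x).
  by move=> lam hp; apply: (main (size lam).+1).
elim=> [|n IH] lam0 hsz hp; first by [].
case: (classic (exists x, lamPerpB lam0 x)) => [[x0 hx0]|hnone]; last first.
  by right; right => x hx; apply: hnone; exists x.
case: (classic (exists nu, is_partition nu /\ (size nu < size lam0)%N /\ reduces lam0 nu))
  => [[nu [pnu [snu rnu]]]|hno].
  have hRf := reduces_Rf rnu.
  have [z hz] := Rf_perp hRf hx0.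
  have := IH nu (leq_trans snu hsz) pnu.
  case=> [[hnov|[c [mu [hc [hnov hnumu]]]]]|[[mu [hnov [hs' hr]]]|h3]].
  + by right; left; exists nu.
  + right; left; exists mu; split => //; split.
      by move: snu; rewrite hnumu size_map.
    move: (hnov) => [[hmu0 [_ hmupos]] _].
    apply: Rf_reduces => //; apply: (Rf_trans hRf); apply: Rf_sub.
      by rewrite hnumu size_map.
    by move=> x; rewrite hnumu => /perp_scale; apply; lia.
  + right; left; exists mu; split => //; split; first exact: ltn_trans hs' snu.
    move: (hnov) => [[hmu0 [_ hmupos]] _].
    by apply: Rf_reduces => //; apply: (Rf_trans hRf); apply: reduces_Rf.
  + by exfalso; exact: h3 z hz.
move: (hp) => [hn [hs hpos]].
set g := G lam0.
have hposn : forall i, (i < size lam0)%N -> (0 < nth 0%N lam0 i)%N.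
  by move=> i hi; apply: (all_nthP 0%N hpos).
have hgd : forall i, (i < size lam0)%N -> (g %| nth 0%N lam0 i)%N.
  by move=> i hi; apply: G_dvd; exact: mem_nth.
have hg : (0 < g)%N.
  rewrite lt0n; apply/negP => /eqP g0; have := hgd 0%N hn; rewrite g0 dvd0n => /eqP e.
  by have := hposn 0%N hn; rewrite e.
set mu := map (fun a => a %/ g)%N lam0.
have hlam : lam0 = scale_part g mu.
  rewrite /scale_part /mu -map_comp -[LHS]map_id; apply/eq_in_map => a ha /=.
  by rewrite mulnC divnK //; apply: G_dvd.
have hGmu : G mu = 1%N.
  have := G_scale g mu; rewrite -hlam -/g => e.
  by apply/eqP; rewrite -(eqn_pmul2l hg) muln1 -e.
have hsmu : size mu = size lam0 by rewrite size_map.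
have hnl : forall i, (i < size mu)%N -> nth 0%N lam0 i = (g * nth 0%N mu i)%N.
  by move=> i hi; rewrite {1}hlam (nth_map 0%N).
have hperp : forall x, lamPerpB lam0 x <-> lamPerpB mu x.
  by move=> x; rewrite {1}hlam; exact: perp_scale.
have hmupos : forall i, (i < size mu)%N -> (0 < nth 0%N mu i)%N.
  move=> i; rewrite hsmu => hi; rewrite (nth_map 0%N) // divn_gt0 //.
  by apply: dvdn_leq; [apply: hposn | apply: hgd].
have pmu : is_partition mu.
  split; first by rewrite hsmu.
  split; last by apply/(all_nthP 0%N) => i hi; apply: hmupos.
  apply/(sortedP 0%N) => i; rewrite hsmu => hi.
  rewrite !(nth_map 0%N) //; last exact: ltnW.
  by rewrite /geq /= leq_div2r //; have := (sortedP 0%N hs) i hi.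
have hprop : forall v : nat -> int,
    (forall x, lamPerpB mu x -> \sum_(i < size mu) v i * x`_i = 0) ->
    forall i j, (i < size mu)%N -> (j < size mu)%N ->
    v i * (nth 0%N mu j)%:Z = v j * (nth 0%N mu i)%:Z.
  move=> v hv i j; rewrite hsmu => hi hj.
  have hv' : forall x, lamPerpB lam0 x -> \sum_(i < size lam0) v i * x`_i = 0.
    by move=> x hx; rewrite -hsmu; apply: hv; apply/hperp.
  have := key hp hno hv' hi hj.
  rewrite !hnl ?hsmu // !PoszM => e.
  apply/eqP; rewrite -subr_eq0; apply/eqP.
  have : g%:Z * (v i * (nth 0%N mu j)%:Z - v j * (nth 0%N mu i)%:Z) = 0.
    transitivity (v i * (g%:Z * (nth 0%N mu j)%:Z) - v j * (g%:Z * (nth 0%N mu i)%:Z)).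
      by ring.
    by rewrite e subrr.
  by move/eqP; rewrite mulf_eq0 eqz_nat gtn_eqF //= => /eqP.
have hmu0 : (0 < size mu)%N by rewrite hsmu.
have hnov : novel mu.
  split => //; split; first by exists x0; apply/hperp.
  split.
  - move=> nu pnu [rmn nrn]; apply: nrn.
    move: (rmn) => [b [hb [hc [v [[hpv hhv] hvx]]]]].
    have hcb : (count id b <= size b)%N := count_size _ _.
    case: (ltngtP (size nu) (size mu)) => hsn.
    + exfalso; apply: hno; exists nu; split => //; split; first by rewrite -hsmu.
      exists b; split; first by rewrite hb hsmu.
      split => //; exists v; split => // x hx; apply: hvx; exact/hperp.
    + by exfalso; move: hcb; rewrite hb hc leqNgt hsn.
    have hball : b = nseq (size mu) true.
      have hall : all id b by rewrite all_count hc hb hsn.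
      rewrite -hb; apply/all_pred1P; apply: sub_all hall; by case.
    have hsv : size v = size mu by rewrite -hsn -(perm_size hpv) size_map.
    have hdv : forall x, lamPerpB mu x -> \sum_(i < size mu) v`_i * x`_i = 0.
      move=> x hx; have := hvx x hx; rewrite hball mask_true; last first.
        by move: hx => /lamPerpBE [[-> _] _].
      by move=> [_]; rewrite /dotz hsv.
    have [_ hpr] := corr pmu pnu hsv hhv hpv (hprop (fun i => v`_i) hdv).
    exists (nseq (size nu) true); split; first by rewrite size_nseq.
    split; first by rewrite count_nseq /= mul1n.
    exists (map Posz mu); split.
      split; first by rewrite absz_Posz_map perm_refl.
      by rewrite -nth0 nthPosz ltz_nat hmupos.
    move=> x hx; rewrite mask_true; last by move: hx => /lamPerpBE [[-> _] _].
    change (lamPerpB mu x).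
    apply/lamPerpBE; move: hx => /lamPerpBE [hsx hd]; split; first by rewrite -hsn.
    have : (nth 0%N nu 0)%:Z * \sum_(i < size mu) (nth 0%N mu i)%:Z * x`_i = 0.
      transitivity ((nth 0%N mu 0)%:Z * \sum_(i < size nu) (nth 0%N nu i)%:Z * x`_i);
        last by rewrite hd mulr0.
      rewrite !mulr_sumr hsn; apply: eq_bigr => i _; rewrite !mulrA -!PoszM hpr //.
      by rewrite mulnC.
    move/eqP; rewrite mulf_eq0 eqz_nat => /orP [h|/eqP //].
    move: pnu => [hnu0 [_ hnupos]].
    by move: (all_nthP 0%N hnupos 0%N hnu0); rewrite lt0n h.
  - move=> nu pnu [hsz' [w [[hpw hhw] hw]]].
    have hsw : size w = size mu by rewrite hsz' -(perm_size hpw) size_map.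
    have hdw : forall x, lamPerpB mu x -> \sum_(i < size mu) w`_i * x`_i = 0.
      by move=> x /hw [_]; rewrite /dotz hsw.
    have [_ hpr] := corr pmu pnu hsw hhw hpw (hprop _ hdw).
    have ha0 := hmupos 0%N hmu0.
    have hb0 : (0 < nth 0%N nu 0)%N.
      by move: pnu => [hnu0 [_ hnupos]]; apply: (all_nthP 0%N hnupos).
    have hd : (nth 0%N mu 0 %| nth 0%N nu 0 * G mu)%N.
      apply: dvd_G => a /(nthP 0%N) [j hj <-].
      by rewrite hpr // dvdn_mull.
    rewrite hGmu muln1 in hd.
    set c := (nth 0%N nu 0 %/ nth 0%N mu 0)%N.
    have hb0e : nth 0%N nu 0 = (c * nth 0%N mu 0)%N by rewrite divnK.
    have hnueq : nu = scale_part c mu.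
      apply: (eq_from_nth (x0 := 0%N)); first by rewrite size_map hsz'.
      move=> j; rewrite -hsz' => hj; rewrite (nth_map 0%N) //.
      apply/eqP; rewrite -(eqn_pmul2r ha0) -(hpr 0%N j) // hb0e.
      by rewrite mulnAC.
    have hc0 : (0 < c)%N by move: hb0; rewrite hb0e muln_gt0 => /andP[].
    rewrite hnueq; exact: lex_scale.
case: (leqP g 1) => hg1.
  have g1 : g = 1%N by lia.
  by left; left; rewrite hlam g1 scale1.
by left; right; exists g, mu.
Qed.
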